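(* Let $\oplus$ be a combinator. Then $\oplus$ satisfies ($\oplus$PAR): for every pair $\langle\preceq_1,\preceq_2\rangle$ in its domain and all $x,y \in W$, if $x \prec_{1\oplus 2} y$ then for each $i \in \{1,2\}$ there exists $z$ with $x \sim_{1\oplus 2} z$ and $z \prec_i y$; if and only if it satisfies ($\oplus$SB): for every pair in its domain and every $S \subseteq W$, if $x \prec_{1\oplus 2} y$ for every $x \in S^c$ and $y \in S$, then $\min(\preceq_1, S) \cup \min(\preceq_2, S) \subseteq \min(\preceq_{1\oplus 2}, S)$.
   Context: $W$ is a finite nonempty set (of possible worlds); $S^c$ is the complement of $S$ in $W$. A tpo is a total preorder on $W$; $\prec$, $\sim$ its strict and symmetric parts. For $S \subseteq W$, $\min(\preceq, S) = \{x \in S : x \preceq y\ \forall y \in S\}$. A combinator $\oplus$ maps pairs of tpos $\langle\preceq_1,\preceq_2\rangle$ in its domain to a tpo $\preceq_{1\oplus 2}$, with strict part $\prec_{1\oplus 2}$ and symmetric part $\sim_{1\oplus 2}$. *)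

(* Defs.v *)
From mathcomp Require Import all_boot.
Set Implicit Arguments. Unset Strict Implicit. Unset Printing Implicit Defensive.

Section Defs.
Variable W : finType.

Definition tpo (le : rel W) : Prop := total le /\ transitive le.

Definition strict (le : rel W) : rel W := fun x y => le x y && ~~ le y x.
Definition symm (le : rel W) : rel W := fun x y => le x y && le y x.

Definition minset (le : rel W) (S : {set W}) : {set W} :=
  [set x in S | [forall y in S, le x y]].

Record combinator := Combinator {
  cdom : rel W -> rel W -> Prop;
  cop : rel W -> rel W -> rel W;
  cdom_tpo : forall l1 l2, cdom l1 l2 -> tpo l1 /\ tpo l2;
  cop_tpo : forall l1 l2, cdom l1 l2 -> tpo (cop l1 l2)
}.

Definition PAR (c : combinator) : Prop :=
  forall l1 l2, cdom c l1 l2 ->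
  forall x y : W, strict (cop c l1 l2) x y ->
    (exists z, symm (cop c l1 l2) x z && strict l1 z y) /\
    (exists z, symm (cop c l1 l2) x z && strict l2 z y).

Definition SB (c : combinator) : Prop :=
  forall l1 l2, cdom c l1 l2 ->
  forall S : {set W},
    (forall x y, x \in ~: S -> y \in S -> strict (cop c l1 l2) x y) ->
    minset l1 S :|: minset l2 S \subset minset (cop c l1 l2) S.

End Defs.

(* Main.v *)
Require Import Defs.
From mathcomp Require Import all_boot.

Lemma min_exists (W : finType) (le : rel W) (S : {set W}) (x0 : W) :
  tpo le -> x0 \in S -> exists2 z, z \in S & forall w, w \in S -> le z w.
Proof.
move=> [tot tr] x0S.
case: (@arg_maxnP _ x0 (mem S) (fun z => #|[set w in S | le z w]|) x0S) => z zS zmax.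
exists z => // w wS.
case lezw: (le z w) => //.
have lewz : le w z by case/orP: (tot w z) => //; rewrite lezw.
have := zmax w wS.
have: [set u in S | le z u] \proper [set u in S | le w u].
  apply/properP; split.
    by apply/subsetP => u; rewrite !inE => /andP[-> /(tr _ _ _ lewz)].
  exists w; first by rewrite inE wS; case/orP: (tot w w).
  by rewrite inE lezw andbF.
by move/proper_card; rewrite ltnNge => /negP.
Qed.

Theorem proposition9 (W : finType) (HW : 0 < #|W|) (c : combinator W) :
  PAR c <-> SB c.
Proof.
split.
- move=> par l1 l2 dom S hS.
  have [[t1 r1] [t2 r2]] := cdom_tpo dom.
  have [t r] := cop_tpo dom.
  apply/subsetP => x; rewrite !inE.
  move=> hx.
  have xS : x \in S by case/orP: hx => /andP[].
  rewrite xS /=; apply/forallP => y; apply/implyP => yS.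
  case lexy: (cop c l1 l2 x y) => //.
  have syx : strict (cop c l1 l2) y x.
    by rewrite /strict lexy andbT; case/orP: (t y x) => //; rewrite lexy.
  have [[z1 /andP[s1 st1]] [z2 /andP[s2 st2]]] := par _ _ dom _ _ syx.
  case/orP: hx => /andP[_ /forallP hm].
  + case z1S: (z1 \in S).
      by move: (implyP (hm z1) z1S) st1 => h; rewrite /strict h andbF.
    have := hS z1 y; rewrite inE z1S => /(_ isT yS).
    by move: s1; rewrite /symm /strict => /andP[h _]; rewrite h andbF.
  + case z2S: (z2 \in S).
      by move: (implyP (hm z2) z2S) st2 => h; rewrite /strict h andbF.
    have := hS z2 y; rewrite inE z2S => /(_ isT yS).
    by move: s2; rewrite /symm /strict => /andP[h _]; rewrite h andbF.
- move=> sb l1 l2 dom x y sxy.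
  have [[t1 r1] [t2 r2]] := cdom_tpo dom.
  have [t r] := cop_tpo dom.
  pose S := [set w | (cop c l1 l2) x w].
  have xS : x \in S by rewrite inE; case/orP: (t x x).
  have yS : y \in S by rewrite inE; case/andP: sxy.
  have hS : forall u v, u \in ~: S -> v \in S -> strict (cop c l1 l2) u v.
    move=> u v; rewrite /S !inE => nxu xv.
    have lux : (cop c l1 l2) u x by case/orP: (t u x) => // h; move: nxu; rewrite h.
    rewrite /strict (r _ _ _ lux xv) /=; apply/negP => lvu.
    by move: nxu; rewrite (r _ _ _ xv lvu).
  have sub := sb _ _ dom S hS.
  have key : forall l : rel W, tpo l ->
      Defs.minset l S \subset Defs.minset (cop c l1 l2) S -> exists z, symm (cop c l1 l2) x z && strict l z y.
    move=> l [tl rl] subl.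
    have [z zS zm] := @min_exists _ l S x (conj tl rl) xS.
    have zmin : z \in Defs.minset l S.
      by rewrite inE zS; apply/forallP => w; apply/implyP; apply: zm.
    have := subsetP subl _ zmin; rewrite inE => /andP[_ /forallP zm'].
    exists z; rewrite /symm /strict.
    move: zS; rewrite inE => -> /=.
    rewrite (implyP (zm' x) xS) /= (zm y yS) /=.
    apply/negP => lyz.
    have ymin : y \in Defs.minset l S.
      by rewrite inE yS; apply/forallP => w; apply/implyP => wS; apply: (rl _ _ _ lyz (zm w wS)).
    have := subsetP subl _ ymin; rewrite inE => /andP[_ /forallP ym].
    by move: sxy; rewrite /strict (implyP (ym x) xS) andbF.
  split; apply: key => //; apply: subset_trans sub.
    by apply: subsetUl.
  by apply: subsetUr.
Qed.
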